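(* Let $L>0$, $N\ge1$, and let $x=(x_1,\dots,x_{2N})\in(\mathbb{R}_{>0})^{2N}$ satisfy the highest weight condition and $\sum_{i=1}^{2N}x_i\le L$. Let $u$, $(\mu^{(i)})_{1\le i\le u}$ and $(N^{(i)})_{1\le i\le u}$ be produced by Algorithm II started from $x^{(1)}=x$. Then $$\sum_{i=1}^{u}N^{(i)}\mu^{(i)}\le \frac{L}{2}.$$ Equivalently, the Young diagram having $\nu^{(i)}=N^{(i)}-N^{(i+1)}$ rows of length $\lambda^{(i)}=\sum_{l\le i}\mu^{(l)}$ ($1\le i\le u$, with $N^{(u+1)}=0$) has area at most $L/2$.
   Context: Highest weight condition: a sequence $x_1,\dots,x_{2n}$ of nonnegative reals satisfies it if $\sum_{i=1}^k(x_{2i-1}-x_{2i})\ge0$ for all $1\le k\le n$. Algorithm II. Set $N^{(1)}=N$, $x^{(1)}=x$. Given $x^{(i)}=(x^{(i)}_1,\dots,x^{(i)}_{2N^{(i)}})$ of positive reals satisfying the highest weight condition: let $\mu^{(i)}=\min_j x^{(i)}_j$ and $y^{(i)}_j=x^{(i)}_j-\mu^{(i)}$. In the (linear, non-cyclic) array $y^{(i)}_1,\dots,y^{(i)}_{2N^{(i)}}$ consider the maximal runs of consecutive zeros (a lone zero counts as a run); say there are $k^{(i)}$ runs with lengths $n^{(i)}_1,\dots,n^{(i)}_{k^{(i)}}$. Let $N^{(i+1)}=N^{(i)}-\sum_{j}\lceil n^{(i)}_j/2\rceil$. If $N^{(i+1)}=0$, stop and set $u=i$. Otherwise form $x^{(i+1)}$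 from $y^{(i)}$: (a) if a run of zeros is at the left end, delete it; (b) for every run of zeros lying between positive entries $a,b$, delete the zeros if the run length is even, and if odd delete the zeros and also replace $a,b$ by the single entry $a+b$; (c') if a run of zeros is at the right end, preceded by a positive entry $a$, delete the zeros, and if its length is odd also delete $a$. Repeat with $x^{(i+1)}$. *)

(* Defs.v *)
(* the statement is purely order-algebraic, stated over an
   arbitrary real field R (covers the reals). *)
From HB Require Import structures.
From mathcomp Require Import all_boot all_order all_algebra.
Set Implicit Arguments. Unset Strict Implicit. Unset Printing Implicit Defensive.
Import Order.TTheory GRing.Theory Num.Theory.
Local Open Scope ring_scope.

Section AlgII.
Variable R : realFieldType.

(* Highest weight condition for x = (x_1,...,x_{2n}) (0-indexed here):
   for all 1 <= k <= n, sum_{i=1}^k (x_{2i-1} - x_{2i}) >= 0. *)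
Definition highest_weight (x : seq R) : Prop :=
  forall k : nat, (1 <= k <= (size x)./2)%N ->
    0 <= \sum_(i < k) (x`_(i.*2) - x`_(i.*2.+1)).

Definition minseq (x : seq R) : R := foldr Num.min (head 0 x) x.

(* y^{(i)} = x^{(i)} - mu^{(i)} *)
Definition shifted (x : seq R) : seq R := [seq a - minseq x | a <- x].

(* decomposition of a sequence into positive entries and maximal runs of zeros *)
Inductive token := Pos of R | Zeros of nat.

Fixpoint tokens (y : seq R) : seq token :=
  match y with
  | [::] => [::]
  | a :: t =>
      let ts := tokens t in
      if a == 0 then
        match ts with
        | Zeros n :: ts' => Zeros n.+1 :: ts'
        | _ => Zeros 1 :: ts
        end
      else Pos a :: ts
  end.

Definition zero_runs (ts : seq token) : seq nat :=
  [seq (if t is Zeros n then n else 0%N) | t <- ts & if t is Zeros _ then true else false].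

Definition nextN (N : nat) (x : seq R) : nat :=
  (N - sumn [seq uphalf n | n <- zero_runs (tokens (shifted x))])%N.

(* rule (b): interior runs; acc is reversed output, merge = previous run was odd *)
Fixpoint interior (acc : seq R) (merge : bool) (ts : seq token) : seq R :=
  match ts with
  | [::] => rev acc
  | Pos a :: ts' =>
      if merge then
        match acc with
        | h :: t => interior ((h + a) :: t) false ts'
        | [::] => interior [:: a] false ts'
        end
      else interior (a :: acc) false ts'
  | Zeros n :: ts' => interior acc (odd n) ts'
  end.

Definition stepx (x : seq R) : seq R :=
  let ts := tokens (shifted x) in
  let ts1 := if ts is Zeros _ :: ts' then ts' else ts in
  let (ts2, oddr) :=
    match rev ts1 with
    | Zeros n :: r => (rev r, odd n)
    | _ => (ts1, false)
    end in
  let z := interior [::] false ts2 in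
  (* (c') an odd right-end run also deletes the preceding entry *)
  if oddr then take (size z).-1 z else z.

(* A run of Algorithm II of length u started from x^{(1)} = x, N^{(1)} = N:
   xs i = x^{(i)}, Ns i = N^{(i)} for 1 <= i <= u, and the algorithm stops
   exactly at step u (N^{(i+1)} <> 0 for i < u, N^{(u+1)} = 0). *)
Definition algII_run (N : nat) (x : seq R) (u : nat)
    (xs : nat -> seq R) (Ns : nat -> nat) : Prop :=
  [/\ (1 <= u)%N, xs 1%N = x, Ns 1%N = N,
      (forall i : nat, (1 <= i < u)%N ->
         [/\ Ns i.+1 = nextN (Ns i) (xs i), Ns i.+1 <> 0%N & xs i.+1 = stepx (xs i)])
    & nextN (Ns u) (xs u) = 0%N].

End AlgII.

(* Main.v *)
Require Import Defs.
From HB Require Import structures.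
From mathcomp Require Import all_boot all_order all_algebra.
From mathcomp Require Import lra zify.
Import Order.TTheory GRing.Theory Num.Theory.
Local Open Scope ring_scope.

Section Aux.
Variable R : realFieldType.

Definition tlen (t : token R) : nat := if t is Zeros n then n else 1%N.
Definition tS (t : token R) : nat := if t is Zeros n then uphalf n else 0%N.
Definition tval (t : token R) : R := if t is Pos a then a else 0.
Definition tnn (t : token R) : bool := if t is Pos a then 0 <= a else true.
Definition lenT (ts : seq (token R)) : nat := sumn (map tlen ts).
Definition ST (ts : seq (token R)) : nat := sumn (map tS ts).
Definition valT (ts : seq (token R)) : R := \sum_(t <- ts) tval t.
Definition nneg (s : seq R) := all (fun a => 0 <= a) s.

Lemma tokens_len (y : seq R) : lenT (tokens y) = size y.
Proof.
elim: y => [|a y IH] //=; case: (a == 0) => //=; last by rewrite /lenT /= -/(lenT _) IH.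
move: IH; rewrite /lenT; case: (tokens y) => [|[b|n] ts] /= IH; lia.
Qed.

Lemma tokens_val (y : seq R) : valT (tokens y) = \sum_(a <- y) a.
Proof.
elim: y => [|a y IH] /=; first by rewrite /valT !big_nil.
rewrite big_cons; case: eqP => [->|_]; last by rewrite /valT big_cons /= -/(valT _) IH.
move: IH; rewrite /valT; case: (tokens y) => [|[b|n] ts] /= IH;
  rewrite ?big_cons /= -?IH ?big_cons /= ?big_nil; lra.
Qed.

Lemma tokens_nn {y : seq R} : nneg y -> all tnn (tokens y).
Proof.
elim: y => [|a y IH] //= /andP[ha hy]; have := IH hy.
case: (a == 0) => /=; last by rewrite ha.
by case: (tokens y) => [|[b|n] ts] /=.
Qed.

Lemma zero_runs_S ts : sumn [seq uphalf n | n <- zero_runs ts] = ST ts.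
Proof. by elim: ts => [|[b|n] ts IH] //=; rewrite IH. Qed.

Lemma interior_size acc (m : bool) ts :
  (size acc + lenT ts <= size (interior acc m ts) + 2 * ST ts + m)%N.
Proof.
elim: ts acc m => [|[b|n] ts IH] acc m /=.
- by rewrite size_rev /lenT /ST /=; lia.
- case: m; last by have := IH (b :: acc) false; rewrite /lenT /ST /=; lia.
  case: acc => [|h t].
  + have := IH [:: b] false; rewrite /lenT /ST /=; lia.
  + have := IH (h + b :: t) false; rewrite /lenT /ST /=; lia.
- have := IH acc (odd n); rewrite /lenT /ST /=.
  have := uphalf_half n; have := odd_double_half n; lia.
Qed.

Lemma interior_sum acc (m : bool) ts :
  \sum_(a <- interior acc m ts) a = \sum_(a <- acc) a + valT ts.
Proof.
elim: ts acc m => [|[b|n] ts IH] acc m /=.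
- by rewrite big_rev /valT big_nil addr0.
- rewrite /valT big_cons /= -/(valT _).
  case: m; last by rewrite IH big_cons; lra.
  case: acc => [|h t]; rewrite IH !big_cons ?big_nil; lra.
- by rewrite IH /valT big_cons /= add0r.
Qed.

Lemma interior_nn acc (m : bool) ts :
  nneg acc -> all tnn ts -> nneg (interior acc m ts).
Proof.
elim: ts acc m => [|[b|n] ts IH] acc m /=.
- by rewrite /nneg all_rev.
- move=> ha /andP[hb hts]; case: m; last by apply: IH => //=; rewrite hb.
  case: acc ha => [|h t] ha; apply: IH => //=; first by rewrite hb.
  by move: ha => /= /andP[hh ->]; rewrite addr_ge0.
- by move=> ha hts; apply: IH.
Qed.

Definition stepts (ts : seq (token R)) : seq R :=
  let ts1 := if ts is Zeros _ :: ts' then ts' else ts in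
  let (ts2, oddr) :=
    match rev ts1 with
    | Zeros n :: r => (rev r, odd n)
    | _ => (ts1, false)
    end in
  let z := interior [::] false ts2 in
  if oddr then take (size z).-1 z else z.

Lemma stepxE (x : seq R) : stepx x = stepts (tokens (shifted x)).
Proof. by []. Qed.

Lemma sum_nn s : nneg s -> 0 <= \sum_(a <- s) a.
Proof. elim: s => [|a s IH] /=; first by rewrite big_nil. rewrite big_cons => /andP[h1 h2]; by rewrite addr_ge0 ?IH. Qed.

Lemma lenT_rcons s t : lenT (rcons s t) = (lenT s + tlen t)%N.
Proof. by rewrite /lenT -cats1 map_cat sumn_cat /= addn0. Qed.
Lemma ST_rcons s t : ST (rcons s t) = (ST s + tS t)%N.
Proof. by rewrite /ST -cats1 map_cat sumn_cat /= addn0. Qed.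
Lemma valT_rcons s t : valT (rcons s t) = valT s + tval t.
Proof. by rewrite /valT -cats1 big_cat /= big_cons big_nil addr0. Qed.

Definition dropl (ts : seq (token R)) := if ts is Zeros _ :: ts' then ts' else ts.

Lemma stepts_all (ts : seq (token R)) : all tnn ts ->
  [/\ (lenT ts <= size (stepts ts) + 2 * ST ts)%N,
      \sum_(a <- stepts ts) a <= valT ts & nneg (stepts ts)].
Proof.
move=> hts.
have h1 : (lenT ts + 2 * ST (dropl ts) <= lenT (dropl ts) + 2 * ST ts)%N /\ valT (dropl ts) = valT ts
          /\ all tnn (dropl ts).
  case: ts hts => [|[b|n] ts] //= hts.
  rewrite /lenT /ST /valT big_cons /= add0r; split => //.
  have := uphalf_half n; have := odd_double_half n; lia.
rewrite /stepts -/(dropl ts).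
move: h1; set ts1 := dropl ts => h1.
case: h1 => hl [hv hn1].
case E: (rev ts1) => [|[b|n] r]; rewrite ?E.
- have := interior_size [::] false ts1; have := interior_sum [::] false ts1.
  have := interior_nn [::] false ts1 (isT : nneg [::]) hn1.
  rewrite big_nil add0r /= => hnn -> hs; split => //; [lia | lra].
- have := interior_size [::] false ts1; have := interior_sum [::] false ts1.
  have := interior_nn [::] false ts1 (isT : nneg [::]) hn1.
  rewrite big_nil add0r /= => hnn -> hs; split => //; [lia | lra].
- have Ets : ts1 = rcons (rev r) (Zeros R n) by rewrite -[ts1]revK E rev_cons.
  have hn2 : all tnn (rev r) by move: hn1; rewrite Ets all_rcons => /andP[].
  move: hl hv; rewrite Ets lenT_rcons ST_rcons valT_rcons /= addr0 => hl hv.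
  have := interior_size [::] false (rev r); have := interior_sum [::] false (rev r).
  have := interior_nn [::] false (rev r) (isT : nneg [::]) hn2.
  rewrite big_nil add0r /=.
  set z := interior _ _ _ => hnn hs hsz.
  have := uphalf_half n; have := odd_double_half n.
  case: (odd n) => /= hu hd.
  + split.
    * rewrite size_take; case: ltnP => _; lia.
    * rewrite -hv -hs; rewrite [X in _ <= X](_ : _ = \sum_(a <- take (size z).-1 z ++ drop (size z).-1 z) a); last by rewrite cat_take_drop.
      rewrite big_cat /=.
      have : 0 <= \sum_(a <- drop (size z).-1 z) a.
        by apply: sum_nn; move: hnn; rewrite -{1}(cat_take_drop (size z).-1 z) /nneg all_cat => /andP[].
      lra.
    * by move: hnn; rewrite -{1}(cat_take_drop (size z).-1 z) /nneg all_cat => /andP[].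
  + split => //; [lia | lra].
Qed.

Lemma minseq_le (x : seq R) a : a \in x -> minseq x <= a.
Proof.
rewrite /minseq; elim: x (head 0 x) => [|b x IH] h //=.
rewrite in_cons => /orP[/eqP ->|ha]; rewrite ge_min ?lexx //.
by rewrite IH // orbT.
Qed.

Lemma minseq_ge0 (x : seq R) : nneg x -> 0 <= minseq x.
Proof.
rewrite /minseq; case: x => [|b x] //= /andP[hb hx].
rewrite le_min hb /=; elim: x hx => [|c x IH] //= /andP[hc hx].
by rewrite le_min hc IH.
Qed.

Lemma sum_ge_size (x : seq R) m : (forall a, a \in x -> m <= a) -> (size x)%:R * m <= \sum_(a <- x) a.
Proof.
elim: x => [|a x IH] h; first by rewrite big_nil mul0r.
rewrite big_cons /= -addn1 natrD mulrDl mul1r.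
have := h a (mem_head _ _); have := IH (fun b hb => h b (mem_behead (hb : b \in behead (a :: x)))); lra.
Qed.

Lemma sum_shift (x : seq R) m : \sum_(a <- [seq a - m | a <- x]) a = \sum_(a <- x) a - (size x)%:R * m.
Proof.
elim: x => [|a x IH]; first by rewrite !big_nil mul0r subr0.
rewrite /= !big_cons IH /= -addn1 natrD; lra.
Qed.

Lemma sum_shifted (x : seq R) : \sum_(a <- shifted x) a = \sum_(a <- x) a - (size x)%:R * minseq x.
Proof. exact: sum_shift. Qed.

Lemma step_facts (x : seq R) : nneg x ->
  [/\ nneg (stepx x),
      (size x <= size (stepx x) + 2 * sumn [seq uphalf n | n <- zero_runs (tokens (shifted x))])%N
    & \sum_(a <- stepx x) a <= \sum_(a <- x) a - (size x)%:R * minseq x].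
Proof.
move=> hx.
have hsh : nneg (shifted x).
  by apply/allP => b /mapP[a ha ->]; rewrite subr_ge0 minseq_le.
have [h1 h2 h3] := stepts_all _ (tokens_nn hsh).
rewrite stepxE zero_runs_S; split => //.
- by move: h1; rewrite tokens_len /shifted size_map.
- by apply: (le_trans h2); rewrite tokens_val sum_shifted.
Qed.

End Aux.
Arguments nneg {R}.
Arguments step_facts {R x}.
Arguments minseq_ge0 {R x}.
Arguments minseq_le {R x a}.
Arguments sum_ge_size {R x m}.

Theorem mainTheorem9 (R : realFieldType) (L : R) (N : nat) (x : seq R)
    (u : nat) (xs : nat -> seq R) (Ns : nat -> nat) :
  0 < L -> (1 <= N)%N -> size x = N.*2 -> all (fun a => 0 < a) x ->
  highest_weight x -> \sum_(a <- x) a <= L ->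
  algII_run N x u xs Ns ->
  \sum_(1 <= i < u.+1) (Ns i)%:R * minseq (xs i) <= L / 2%:R.
Proof.
move=> _ _ hsz hpos _ hL [hu hx1 hN1 hstep hend].
have inv : forall k, (1 <= k <= u)%N ->
  [/\ nneg (xs k), (2 * Ns k <= size (xs k))%N &
      2 * \sum_(1 <= i < k) (Ns i)%:R * minseq (xs i) + \sum_(a <- xs k) a <= \sum_(a <- x) a].
  elim => [|k IH] //; case: k IH => [|k] IH hk.
  - rewrite hx1 hN1 big_geq //; split.
    + by apply/allP => a /(allP hpos) /ltW.
    + by rewrite hsz -mul2n.
    + lra.
  - have [hnn hs hsum] := IH (ltac:(lia)).
    have [-> _ ->] := hstep k.+1 (ltac:(lia)).
    have [f1 f2 f3] := step_facts hnn.
    split => //.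
    + rewrite /nextN; lia.
    + rewrite big_nat_recr //=.
      have hm := minseq_ge0 hnn.
      have : ((2 * Ns k.+1)%:R * minseq (xs k.+1) <= (size (xs k.+1))%:R * minseq (xs k.+1)).
        by apply: ler_wpM2r => //; rewrite ler_nat.
      rewrite natrM; lra.
have [hnn hs hsum] := inv u (ltac:(lia)).
rewrite big_nat_recr //=.
have hm := minseq_ge0 hnn.
have : ((2 * Ns u)%:R * minseq (xs u) <= (size (xs u))%:R * minseq (xs u)).
  by apply: ler_wpM2r => //; rewrite ler_nat.
have := sum_ge_size (fun a (ha : a \in xs u) => minseq_le ha).
rewrite natrM; lra.
Qed.
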